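(* Let $M$ be a commutative free monoid on countably many generators $a_1,a_2,\ldots$, with a monoid homomorphism $\deg:M\to(\mathbb Z_{\ge0},+)$ such that $\deg^{-1}(0)=\{1\}$ and $\deg^{-1}(d)$ is finite for all $d>0$. For every type $\tau$, in the monoid ring $\mathbb Z[M]$ (resp. $\mathbb Z[M]\otimes\mathbb Q$) $$S_\tau=\sum_{\lambda}a(\lambda,\tau)X_\lambda\qquad\text{and}\qquad X_\tau=\sum_\lambda a^{-1}(\lambda,\tau)S_\lambda,$$ the sums over types $\lambda$ of the same degree as $\tau$. In particular $\#\{b\in M: b\text{ has type }\lambda\}=\sum_\tau a^{-1}(\tau,\lambda)\prod_{(k,m)\in\tau}\#\{b\in M:\deg b=k\}$.
   Context: Each $b\in M$ can be written uniquely up to order as $b=a_{i_1}^{k_1}\cdots a_{i_n}^{k_n}$ with distinct generators and $k_j\ge1$; its type is the multiset $\{(\deg a_{i_1},k_1),\dots,(\deg a_{i_n},k_n)\}$. In general a type of degree $d$ is a finite multiset of pairs $(b,m)$ of positive integers with $\sum bm=d$. $\psi_m:\mathbb Z[M]\to\mathbb Z[M]$ is the ring endomorphism with $\psi_m(a_k)=a_k^m$. $X_\tau\in\mathbb Z[M]$ is the sum of all elements of $M$ of type $\tau$, and $S_\tau=\prod_{(k,m)\in\tau}\psi_m\big(\sum_{b\in\deg^{-1}(k)}b\big)$. For types $\lambda=\{(b_i,m_i)\}_{i\le r}$ and $\tau=\{(c_j,n_j)\}_{j\le s}$ (fixed orderings), an arrangement of $\lambda$ into $\tau$ is an $r\times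 s$ non-negative integer matrix $A$ with $A\vec n=\vec m$ and $A^T\vec b=\vec c$; $a(\lambda,\tau)$ is the number of arrangements. The matrix $(a(\lambda,\tau))$ indexed by types of degree $d$ is invertible over $\mathbb Q$, with inverse entries $a^{-1}(\lambda,\tau)$. *)

(* Defs.v *)
From HB Require Import structures.
From mathcomp Require Import all_boot all_order all_algebra.
From mathcomp Require Import finmap.
From mathcomp.multinomials Require Import monalg.

Set Implicit Arguments.
Unset Strict Implicit.
Unset Printing Implicit Defensive.

Import GRing.Theory.
Local Open Scope ring_scope.

(* M = the commutative free monoid on countably many generators
   a_1, a_2, ...; generator a_(i+1) is [ucm i], the exponent of a_(i+1)
   in b : M is [b i], product is [mulcm], unit is [onecm]. *)
Notation M := {cmonom nat}.

(* A "type" is a finite multiset of pairs (b,m); it is represented by a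
   sequence, two sequences denoting the same type iff they are [perm_eq]. *)
Definition is_type (t : seq (nat * nat)) : bool :=
  all (fun p => (0 < p.1)%N && (0 < p.2)%N) t.

Definition tdeg (t : seq (nat * nat)) : nat := (\sum_(p <- t) p.1 * p.2)%N.

Definition type_of (deg : M -> nat) (b : M) : seq (nat * nat) :=
  [seq (deg (ucm i), b i) | i <- finsupp b].

Fixpoint msets_w (P : seq (nat * nat)) (d : nat) : seq (seq (nat * nat)) :=
  match P with
  | [::] => if d == 0%N then [:: [::]] else [::]
  | p :: P' =>
      flatten [seq [seq nseq k p ++ t | t <- msets_w P' (d - k * (p.1 * p.2))]
              | k <- iota 0 d.+1 & (k * (p.1 * p.2) <= d)%N]
  end.

(* one representative of every type of degree d (no repetitions) *)
Definition types (d : nat) : seq (seq (nat * nat)) :=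
  msets_w [seq (b, m) | b <- iota 1 d, m <- iota 1 d] d.

(* a(l, t): number of arrangements of l = {(b_i,m_i)} into t = {(c_j,n_j)},
   i.e. r x s matrices A of nonnegative integers with A n = m and A^T b = c.
   (For types, every entry satisfies A_ij <= m_i, so bounding the entries by
   sum_i m_i loses nothing.) *)
Definition arr (l t : seq (nat * nat)) : nat :=
  #|[set A : {ffun 'I_(size l) * 'I_(size t) -> 'I_((\sum_(p <- l) p.2).+1)} |
      [forall i : 'I_(size l),
         (\sum_(j < size t) A (i, j) * (nth (0, 0) t j).2 == (nth (0, 0) l i).2)%N]
   && [forall j : 'I_(size t),
         (\sum_(i < size l) A (i, j) * (nth (0, 0) l i).1 == (nth (0, 0) t j).1)%N]]|.

Definition amx (d : nat) : 'M[rat]_(size (types d)) :=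
  \matrix_(i, j) (arr (nth [::] (types d) i) (nth [::] (types d) j))%:R.

Definition type_idx (d : nat) (l : seq (nat * nat)) : option 'I_(size (types d)) :=
  insub (find (perm_eq l) (types d)).

Definition ainv (d : nat) (l t : seq (nat * nat)) : rat :=
  match type_idx d l, type_idx d t with
  | Some i, Some j => invmx (amx d) i j
  | _, _ => 0
  end.

Section Ring.
Variable R : comNzRingType.

(* psi_m : ring endomorphism of R[M] with psi_m(a_k) = a_k^m,
   i.e. the linear extension of b |-> b^m *)
Definition psi (m : nat) (g : {malg R[M]}) : {malg R[M]} :=
  \sum_(k <- msupp g) << g@_k *g expcmn k m >>.

(* fib enumerates the (finite) fibers of deg *)
Variables (deg : M -> nat) (fib : nat -> seq M).

(* X_t: sum of all elements of M of type t (these all have degree tdeg t) *)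
Definition Xt (t : seq (nat * nat)) : {malg R[M]} :=
  \sum_(b <- fib (tdeg t) | perm_eq (type_of deg b) t) << b >>.

Definition St (t : seq (nat * nat)) : {malg R[M]} :=
  \prod_(p <- t) psi p.2 (\sum_(b <- fib p.1) << b >>).

End Ring.

(* Main.v *)
Require Import Defs.
From HB Require Import structures.
From mathcomp Require Import all_boot all_order all_algebra.
From mathcomp Require Import finmap.
From mathcomp.multinomials Require Import monalg.
From mathcomp Require Import zify.
Import GRing.Theory Num.Theory.
Local Open Scope ring_scope.
Set Implicit Arguments.
Unset Strict Implicit.
Unset Printing Implicit Defensive.

Lemma expcmnE (x : M) n i : expcmn x n i = (n * x i)%N.
Proof.
case: n => [|n]; first by rewrite /expcmn /= onecmE.
elim: n => [|n IH]; first by rewrite /expcmn /= mul1n.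
have -> : expcmn x n.+2 = mulcm x (expcmn x n.+1) by [].
by rewrite mulcmE IH mulSn.
Qed.

Lemma bigcm_eval (T : Type) (r : seq T) (P : pred T) (F : T -> M) i :
  (\big[@mulcm nat/@onecm nat]_(j <- r | P j) F j) i = (\sum_(j <- r | P j) F j i)%N.
Proof.
apply: (big_morph (fun m : M => m i)); last by rewrite onecmE.
by move=> a b; rewrite mulcmE.
Qed.
Lemma tdeg_cat a b : tdeg (a ++ b) = (tdeg a + tdeg b)%N.
Proof. by rewrite /tdeg big_cat. Qed.

Lemma tdeg_nseq k p : tdeg (nseq k p) = (k * (p.1 * p.2))%N.
Proof. by rewrite /tdeg big_nseq; elim: k => //= k ->; rewrite mulSn. Qed.

Lemma tdeg_cons p t : tdeg (p :: t) = (p.1 * p.2 + tdeg t)%N.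
Proof. by rewrite /tdeg big_cons. Qed.

Lemma msetsE p P d : msets_w (p :: P) d =
  flatten [seq [seq nseq k p ++ t | t <- msets_w P (d - k * (p.1 * p.2))]
              | k <- iota 0 d.+1 & (k * (p.1 * p.2) <= d)%N].
Proof. by []. Qed.

Lemma msets_mem P d l : l \in msets_w P d -> {subset l <= P} /\ tdeg l = d.
Proof.
elim: P d l => [|p P IH] d l.
  rewrite /=; case: (d =P 0%N) => [->|_]; rewrite ?in_nil ?inE //.
  by move=> /eqP ->; split => //; rewrite /tdeg big_nil.
rewrite (msetsE p P d); case/flatten_mapP => k; rewrite mem_filter => /andP[hk _] /mapP[u hu ->].
have [sub du] := IH _ _ hu; split.
  move=> q; rewrite mem_cat => /orP[/nseqP[-> _]|/sub]; first by rewrite mem_head.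
  by move=> qP; rewrite inE qP orbT.
by rewrite tdeg_cat tdeg_nseq du subnKC.
Qed.

Lemma filter_pred1_nseq (T : eqType) (p : T) t :
  filter (pred1 p) t = nseq (count_mem p t) p.
Proof. by elim: t => //= q t ->; case: eqP => [->|]. Qed.

Lemma msets_ex P d t : (forall q, q \in P -> 0 < q.1 * q.2)%N ->
  {subset t <= P} -> tdeg t = d -> exists2 l, l \in msets_w P d & perm_eq t l.
Proof.
elim: P d t => [|p P IH] d t hpos sub dt.
  case: t sub dt => [|q t] sub dt; last by have := sub q (mem_head _ _).
  by rewrite -dt /tdeg big_nil /=; exists [::]; rewrite ?inE.
rewrite (msetsE p P d).
set k := count_mem p t; set u := filter (predC1 p) t.
have ht : perm_eq t (nseq k p ++ u).
  by rewrite -filter_pred1_nseq perm_sym perm_filterC.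
have hu : {subset u <= P}.
  move=> q; rewrite mem_filter => /andP[/= qp /sub]; rewrite inE.
  by rewrite (negbTE qp).
have dt' : tdeg t = (k * (p.1 * p.2) + tdeg u)%N.
  by rewrite -tdeg_nseq -tdeg_cat /tdeg (perm_big _ ht).
have [l hl hul] := IH (tdeg u) u (fun q hq => hpos q (ltac:(by rewrite inE hq orbT))) hu erefl.
exists (nseq k p ++ l); last by rewrite (perm_trans ht) // perm_cat2l.
apply/flatten_mapP; exists k.
  rewrite mem_filter mem_iota /= add0n -dt dt' leq_addr /= ltnS.
  apply: leq_trans (leq_addr _ _); apply: leq_pmulr; exact: hpos (mem_head _ _).
apply/mapP; exists l => //; by rewrite -dt dt' addKn.
Qed.

Lemma sum_eq_count (K : seq nat) c : (\sum_(k <- K) (k == c) = count (pred1 c) K)%N.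
Proof. by elim: K => [|k K IH]; rewrite ?big_nil ?big_cons //= IH. Qed.

Lemma msets_count P d t : uniq P -> (forall q, q \in P -> 0 < q.1 * q.2)%N ->
  (count (perm_eq t) (msets_w P d) <= 1)%N.
Proof.
elim: P d t => [|p P IH] d t uP hpos.
  by apply: leq_trans (count_size _ _) _; rewrite /=; case: (d == 0%N).
case/andP: uP => pP uP.
set c := count_mem p t; set u0 := filter (predC1 p) t.
rewrite (msetsE p P d) count_flatten -map_comp sumnE big_map.
have hP' : forall q, q \in P -> (0 < q.1 * q.2)%N.
  by move=> q hq; apply: hpos; rewrite inE hq orbT.
apply: (@leq_trans (\sum_(k <- [seq k <- iota 0 d.+1 | (k * (p.1 * p.2) <= d)%N]) (k == c))).
  apply: leq_sum => k _ /=; rewrite count_map.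
  set ms := msets_w P _.
  rewrite (@eq_in_count _ _ (fun u => (k == c) && perm_eq u0 u && perm_eq t (nseq k p ++ u))); last first.
    move=> u hu /=; case ht: (perm_eq t _); rewrite ?andbF ?andbT //.
    have [subu _] := msets_mem hu.
    have pu : count_mem p u = 0%N.
      by apply/count_memPn; apply: contra pP => /subu.
    have := (permP ht) (pred1 p); rewrite count_cat count_nseq /= eqxx mul1n pu addn0 => hc.
    rewrite /c hc eqxx /=.
    have := perm_filter (predC1 p) ht; rewrite filter_cat filter_nseq /= eqxx mul0n /=.
    suff -> : filter (predC1 p) u = u by [].
    apply/all_filterP/allP => q /= hq; apply: contraNneq pP => <-; exact: subu.
  apply: (@leq_trans (count (fun u => (k == c) && perm_eq u0 u) ms)).
    by apply: sub_count => u /= /andP[].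
  case: (k == c); last by rewrite /= (@eq_count _ _ pred0) ?count_pred0.
  exact: IH.
rewrite sum_eq_count count_uniq_mem ?leq_b1 //.
by apply: filter_uniq; apply: iota_uniq.
Qed.
Lemma big_nth_ord (F : nat * nat -> nat) (l : seq (nat * nat)) :
  (\sum_(p <- l) F p = \sum_(i < size l) F (nth (0, 0) l i))%N.
Proof. by rewrite (big_nth (0, 0)) big_mkord. Qed.

Lemma count_ord (a : pred (nat * nat)) (l : seq (nat * nat)) :
  count a l = (\sum_(i < size l) a (nth (0, 0) l i))%N.
Proof.
rewrite -(big_nth_ord (fun p => nat_of_bool (a p))).
by elim: l => [|p l IH]; rewrite ?big_nil ?big_cons //= IH.
Qed.

Lemma sum_eq_ge k (f g : 'I_k -> nat) : (forall j, g j <= f j)%N ->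
  (\sum_j f j = \sum_j g j)%N -> forall j, f j = g j.
Proof.
move=> le e j; apply/eqP; rewrite eqn_leq le andbT -subn_eq0.
have : (\sum_j (f j - g j) == 0)%N by rewrite sumnB // e subnn.
by rewrite sum_nat_eq0 => /forallP /(_ j).
Qed.

Lemma sum1_pick k (f g : 'I_k -> nat) j : (\sum_j f j = 1)%N -> (0 < f j)%N ->
  (\sum_j' f j' * g j' = g j)%N.
Proof.
rewrite (bigD1 j) //= => e pos.
have fj : f j = 1%N.
  by apply/eqP; rewrite eqn_leq pos -e leq_addr.
move: e; rewrite fj => /eqP; rewrite -[X in (_ == X)%N]addn0 eqn_add2l.
rewrite sum_nat_eq0 => /forallP h.
rewrite (bigD1 j) //= fj mul1n big1 ?addn0 // => j' hj'.
by move: (h j'); rewrite hj' /= => /eqP ->.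
Qed.

Definition sm (l : seq (nat * nat)) := (\sum_(p <- l) p.2)%N.
Definition sb (l : seq (nat * nat)) := (\sum_(p <- l) p.1)%N.

Lemma is_typeP l i : is_type l -> (i < size l)%N ->
  (0 < (nth (0, 0) l i).1)%N /\ (0 < (nth (0, 0) l i).2)%N.
Proof. by move=> /allP h hi; have /andP[] := h _ (mem_nth (0, 0) hi). Qed.

Lemma arr_mono B l t (A : {ffun 'I_(size l) * 'I_(size t) -> 'I_B}) :
  is_type l -> is_type t ->
  [forall i : 'I_(size l),
         (\sum_(j < size t) A (i, j) * (nth (0, 0) t j).2 == (nth (0, 0) l i).2)%N]
   && [forall j : 'I_(size t),
         (\sum_(i < size l) A (i, j) * (nth (0, 0) l i).1 == (nth (0, 0) t j).1)%N] ->
  [/\ (sm t <= sm l)%N, (sb l <= sb t)%N &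
      (sm t = sm l -> sb l = sb t -> perm_eq l t)].
Proof.
move=> tl tt /andP[/forallP rowc /forallP colc].
set b := fun i : 'I_(size l) => (nth (0, 0) l i).1.
set m := fun i : 'I_(size l) => (nth (0, 0) l i).2.
set c := fun j : 'I_(size t) => (nth (0, 0) t j).1.
set n := fun j : 'I_(size t) => (nth (0, 0) t j).2.
set a := fun i j => (A (i, j) : nat).
have rowe i : (\sum_j a i j * n j)%N = m i by apply/eqP/rowc.
have cole j : (\sum_i a i j * b i)%N = c j by apply/eqP/colc.
pose rs i := (\sum_j a i j)%N.
pose cs j := (\sum_i a i j)%N.
have npos j : (0 < n j)%N by have [] := is_typeP tt (ltn_ord j).
have cpos j : (0 < c j)%N by have [] := is_typeP tt (ltn_ord j).
have bpos i : (0 < b i)%N by have [] := is_typeP tl (ltn_ord i).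
have mpos i : (0 < m i)%N by have [] := is_typeP tl (ltn_ord i).
have cspos j : (0 < cs j)%N.
  rewrite lt0n; apply/negP => /eqP h; move: (cpos j); rewrite -cole.
  rewrite big1 // => i _; move/eqP: h; rewrite sum_nat_eq0 => /forallP /(_ i).
  by move=> /eqP ->.
have rspos i : (0 < rs i)%N.
  rewrite lt0n; apply/negP => /eqP h; move: (mpos i); rewrite -rowe.
  rewrite big1 // => j _; move/eqP: h; rewrite sum_nat_eq0 => /forallP /(_ j).
  by move=> /eqP ->.
have esm : sm l = (\sum_j cs j * n j)%N.
  rewrite /sm big_nth_ord.
  transitivity (\sum_i \sum_j a i j * n j)%N.
    by apply: eq_bigr => i _; rewrite rowe.
  rewrite exchange_big /=; apply: eq_bigr => j _.
  by rewrite /cs big_distrl.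
have esmt : sm t = (\sum_j n j)%N by rewrite /sm big_nth_ord.
have esb : sb t = (\sum_i rs i * b i)%N.
  rewrite /sb big_nth_ord.
  transitivity (\sum_j \sum_i a i j * b i)%N.
    by apply: eq_bigr => j _; rewrite cole.
  rewrite exchange_big /=; apply: eq_bigr => i _.
  by rewrite /rs big_distrl.
have esbl : sb l = (\sum_i b i)%N by rewrite /sb big_nth_ord.
have le1 j : (n j <= cs j * n j)%N by rewrite leq_pmull.
have le2 i : (b i <= rs i * b i)%N by rewrite leq_pmull.
split.
- by rewrite esm esmt; apply: leq_sum => j _.
- by rewrite esb esbl; apply: leq_sum => i _.
move=> e1 e2.
have cs1 j : cs j = 1%N.
  have := sum_eq_ge le1 (etrans (esym esm) (etrans (esym e1) esmt)) j.
  by rewrite -{2}[n j]mul1n => /eqP; rewrite eqn_pmul2r // => /eqP.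
have rs1 i : rs i = 1%N.
  have := sum_eq_ge le2 (etrans (esym esb) (etrans (esym e2) esbl)) i.
  by rewrite -{2}[b i]mul1n => /eqP; rewrite eqn_pmul2r // => /eqP.
have key i j : (0 < a i j)%N -> nth (0, 0) l i = nth (0, 0) t j.
  move=> pos.
  have hm : m i = n j by rewrite -rowe (@sum1_pick _ (a i) n j) //; exact: rs1.
  have hb : c j = b i.
    by rewrite -cole (@sum1_pick _ (fun i => a i j) b i) //; exact: cs1.
  by rewrite [nth _ l _]surjective_pairing [nth _ t _]surjective_pairing -/(m i) -/(b i) -/(c j) -/(n j) hm hb.
apply/permP => q.
rewrite !count_ord.
transitivity (\sum_i \sum_j a i j * q (nth (0, 0) l i))%N.
  apply: eq_bigr => i _; rewrite -big_distrl /= -/(rs i) rs1 mul1n //.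
transitivity (\sum_i \sum_j a i j * q (nth (0, 0) t j))%N.
  apply: eq_bigr => i _; apply: eq_bigr => j _.
  by case: (posnP (a i j)) => [->|/key ->]; rewrite ?mul0n.
rewrite exchange_big /=; apply: eq_bigr => j _.
by rewrite -big_distrl /= -/(cs j) cs1 mul1n.
Qed.

Lemma arr_diag l : is_type l -> (0 < arr l l)%N.
Proof.
move=> tl; rewrite /arr card_gt0; apply/set0Pn.
have smpos (i : 'I_(size l)) : (0 < \sum_(p <- l) p.2)%N.
  rewrite big_nth_ord (bigD1 i) //=; apply: leq_trans (leq_addr _ _).
  by have [] := is_typeP tl (ltn_ord i).
have val_inord (i j : 'I_(size l)) :
  ((inord (i == j) : 'I_(\sum_(p <- l) p.2).+1) : nat) = (i == j).
  by rewrite inordK // ltnS; case: eqP => // _; exact: smpos.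
exists [ffun ij : 'I_(size l) * 'I_(size l) => inord (ij.1 == ij.2)].
rewrite inE; apply/andP; split; apply/forallP => i.
  rewrite (bigD1 i) //= ffunE val_inord eqxx mul1n big1 ?addn0 //.
  by move=> j hj; rewrite ffunE val_inord eq_sym (negbTE hj).
rewrite (bigD1 i) //= ffunE val_inord eqxx mul1n big1 ?addn0 //.
by move=> j hj; rewrite ffunE val_inord (negbTE hj).
Qed.

Definition typesP (d : nat) := [seq (b, m) | b <- iota 1 d, m <- iota 1 d].

Lemma typesP_uniq d : uniq (typesP d).
Proof. by apply: allpairs_uniq; rewrite ?iota_uniq // => [[? ?] [? ?]] _ _. Qed.

Lemma typesP_pos d q : q \in typesP d -> (0 < q.1 * q.2)%N.
Proof.
by case/allpairsP => -[b m] [/=]; rewrite !mem_iota => /andP[b1 _] /andP[m1 _] ->; rewrite muln_gt0 b1 m1.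
Qed.

Lemma types_mem d l : l \in types d -> is_type l /\ tdeg l = d.
Proof.
move=> /msets_mem [sub ->]; split => //; apply/allP => q /sub.
case/allpairsP => -[b m] [/=]; rewrite !mem_iota => /andP[b1 _] /andP[m1 _] ->.
by rewrite /= b1 m1.
Qed.

Lemma types_count d t : (count (perm_eq t) (types d) <= 1)%N.
Proof. exact: msets_count (typesP_uniq d) (@typesP_pos d). Qed.

Lemma types_ex t : is_type t -> exists2 l, l \in types (tdeg t) & perm_eq t l.
Proof.
move=> tt; apply: msets_ex => //; first exact: typesP_pos.
move=> q hq; have /andP[q1 q2] := allP tt q hq.
have le : (q.1 * q.2 <= tdeg t)%N.
  by rewrite /tdeg (big_rem q) //= leq_addr.
apply/allpairsP; exists (q.1, q.2); rewrite !mem_iota /= q1 q2 /= -surjective_pairing; split => //.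
  by rewrite add1n ltnS (leq_trans _ le) // leq_pmulr.
by rewrite add1n ltnS (leq_trans _ le) // leq_pmull.
Qed.

Lemma cnt_idx (T : eqType) (x0 : T) (a : pred T) s i j : (count a s <= 1)%N ->
  (i < size s)%N -> (j < size s)%N -> a (nth x0 s i) -> a (nth x0 s j) -> i = j.
Proof.
elim: s i j => [|x s IH] [|i] [|j] //= c hi hj ai aj.
- have : (0 < count a s)%N by rewrite -has_count; apply/hasP; exists (nth x0 s j) => //; exact: mem_nth.
  by move: c; rewrite ai; case: (count a s).
- have : (0 < count a s)%N by rewrite -has_count; apply/hasP; exists (nth x0 s i) => //; exact: mem_nth.
  by move: c; rewrite aj; case: (count a s).
- by rewrite (IH i j) // (leq_trans _ c) // leq_addl.
Qed.

Lemma find_nth (T : eqType) (x0 : T) (a : pred T) s i : (count a s <= 1)%N ->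
  (i < size s)%N -> a (nth x0 s i) -> find a s = i.
Proof.
move=> c hi ai.
have hs : has a s by apply/hasP; exists (nth x0 s i) => //; exact: mem_nth.
apply: (@cnt_idx T x0 a s (find a s) i c) => //; first by rewrite -has_find.
exact: nth_find.
Qed.

Lemma sb_le l : is_type l -> (sb l <= tdeg l)%N.
Proof.
move=> /allP tl; rewrite /sb /tdeg big_seq [X in (_ <= X)%N]big_seq.
by apply: leq_sum => p /tl /andP[_ p2]; rewrite leq_pmulr.
Qed.

Lemma arr_pos_mono l t : is_type l -> is_type t -> (0 < arr l t)%N ->
  [/\ (sm t <= sm l)%N, (sb l <= sb t)%N &
      (sm t = sm l -> sb l = sb t -> perm_eq l t)].
Proof.
move=> tl tt; rewrite /arr card_gt0 => /set0Pn [A]; rewrite inE => hA.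
exact: arr_mono hA.
Qed.

Lemma arith_aux (a b c e d : nat) : (a <= b)%N -> (c <= e)%N -> (e <= d)%N ->
  (b + (d - c) <= a + (d - e))%N -> a = b /\ c = e.
Proof. move=> *; lia. Qed.

Lemma amx_unit d : amx d \in unitmx.
Proof.
rewrite -row_free_unit; apply: inj_row_free => v hv.
apply/eqP; apply/negP => /negP /rV0Pn [i1 hi1].
set s := types d.
pose key (i : 'I_(size s)) := (sm (nth [::] s i) + (d - sb (nth [::] s i)))%N.
have ts (i : 'I_(size s)) : is_type (nth [::] s i) /\ tdeg (nth [::] s i) = d.
  by apply: types_mem; apply: mem_nth.
case: (@arg_maxnP _ i1 (fun i => v 0 i != 0) key hi1) => i0 hi0 hmax.
have := congr1 (fun w : 'rV_(size s) => w 0 i0) hv; rewrite !mxE.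
rewrite (bigD1 i0) //= big1 ?addr0.
  apply/eqP; rewrite mulf_neq0 // mxE pnatr_eq0 -lt0n.
  by apply: arr_diag; case: (ts i0).
move=> j hj; case: (eqVneq (v 0 j) 0) => [->|vj]; first by rewrite mul0r.
rewrite mxE; case: (posnP (arr (nth [::] s j) (nth [::] s i0))) => [->|pos].
  by rewrite mulr0.
have [[tj dj] [ti di]] := (ts j, ts i0).
have [h1 h2 h3] := arr_pos_mono tj ti pos.
have hk : (key j <= key i0)%N := hmax j vj.
rewrite /key in hk.
have [e1 e2] : sm (nth [::] s i0) = sm (nth [::] s j) /\
               sb (nth [::] s j) = sb (nth [::] s i0).
  have := sb_le ti; rewrite di => hb.
  exact: (arith_aux h1 h2 hb hk).
have hp := h3 e1 e2.
have := @cnt_idx _ [::] (perm_eq (nth [::] s j)) s j i0 (types_count d _) (ltn_ord j) (ltn_ord i0).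
by rewrite perm_refl hp => /(_ erefl erefl) /val_inj hji; rewrite hji eqxx in hj.
Qed.

Section Core.
Variables (deg : M -> nat) (fib : nat -> seq M).
Hypothesis deg_one : deg (@onecm nat) = 0%N.
Hypothesis deg_mul : forall x y : M, deg (mulcm x y) = (deg x + deg y)%N.
Hypothesis deg_eq0 : forall b : M, deg b = 0%N -> b = @onecm nat.
Hypothesis fibP : forall (d : nat) (b : M), (b \in fib d) = (deg b == d).
Hypothesis fib_uniq : forall d : nat, uniq (fib d).

Lemma deg_prod (T : Type) (r : seq T) (P : pred T) (F : T -> M) :
  deg (\big[@mulcm nat/@onecm nat]_(j <- r | P j) F j) = (\sum_(j <- r | P j) deg (F j))%N.
Proof. exact: (big_morph deg deg_mul deg_one). Qed.

Lemma deg_exp (b : M) n : deg (expcmn b n) = (n * deg b)%N.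
Proof.
case: n => [|n]; first by rewrite /expcmn /= deg_one.
elim: n => [|n IH]; first by rewrite /expcmn /= mul1n.
have -> : expcmn b n.+2 = mulcm b (expcmn b n.+1) by [].
by rewrite deg_mul IH mulSn.
Qed.

Lemma deg_ucm_pos i : (0 < deg (ucm i))%N.
Proof.
rewrite lt0n; apply/negP => /eqP /deg_eq0 h.
by have := ucmE i i; rewrite h onecmE eqxx.
Qed.

Lemma prod_eval r (g : 'I_r -> nat) (e : 'I_r -> nat) y :
  (\big[@mulcm nat/@onecm nat]_(i < r) expcmn (ucm (g i)) (e i)) y
  = (\sum_(i < r) e i * (g i == y))%N.
Proof. by rewrite bigcm_eval; apply: eq_bigr => i _; rewrite expcmnE ucmE. Qed.

Lemma sum_pick_g r (g : 'I_r -> nat) (e : 'I_r -> nat) (i0 : 'I_r) :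
  injective g -> (\sum_(i < r) e i * (g i == g i0))%N = e i0.
Proof.
move=> ig; rewrite (bigD1 i0) //= eqxx muln1 big1 ?addn0 // => i hi.
by rewrite (inj_eq ig) (negbTE hi) muln0.
Qed.

Lemma sum_pick_out r (g : 'I_r -> nat) (e : 'I_r -> nat) y :
  (forall i, g i != y) -> (\sum_(i < r) e i * (g i == y))%N = 0%N.
Proof. by move=> hy; rewrite big1 // => i _; rewrite (negbTE (hy i)) muln0. Qed.

Lemma decomp r (g : 'I_r -> nat) (b : M) : injective g ->
  (forall y, b y != 0%N -> exists i, g i = y) ->
  b = \big[@mulcm nat/@onecm nat]_(i < r) expcmn (ucm (g i)) (b (g i)).
Proof.
move=> ig hb; apply/eqP/cmP => y; rewrite prod_eval.
case: (boolP [exists i, g i == y]) => [/existsP [i /eqP <-]|].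
  by rewrite sum_pick_g.
move=> /existsPn hn; rewrite sum_pick_out //.
apply/eqP; apply: contraT => /hb [i hi]; by move: (hn i); rewrite hi eqxx.
Qed.


Definition cN (t : seq (nat * nat)) := (\sum_(p <- t) size (fib p.1)).+1.

Lemma size_fib_lt t (j : 'I_(size t)) : (size (fib (nth (0, 0) t j).1) < cN t)%N.
Proof.
rewrite /cN ltnS (big_nth_ord (fun p => size (fib p.1))) (bigD1 j) //=.
exact: leq_addr.
Qed.

Definition bj t (f : {ffun 'I_(size t) -> 'I_(cN t)}) (j : 'I_(size t)) : M :=
  nth (@onecm nat) (fib (nth (0, 0) t j).1) (f j).

Definition Pt t (f : {ffun 'I_(size t) -> 'I_(cN t)}) : M :=
  \big[@mulcm nat/@onecm nat]_(j < size t) expcmn (bj f j) (nth (0, 0) t j).2.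

Definition Qt t (j : 'I_(size t)) : pred 'I_(cN t) :=
  fun u => (u < size (fib (nth (0, 0) t j).1))%N.

Definition Tset t (x : M) := [set f : {ffun 'I_(size t) -> 'I_(cN t)} |
  (f \in family (@Qt t)) && (Pt f == x)].

Lemma le_sm l (i : 'I_(size l)) : ((nth (0, 0) l i).2 <= \sum_(p <- l) p.2)%N.
Proof. by rewrite (big_nth_ord (fun p => p.2)) (bigD1 i) //= leq_addr. Qed.

Lemma core t (x : M) (s : seq nat) : is_type t -> uniq s ->
  (forall y, (y \in s) = (x y != 0%N)) ->
  #|Tset t x| = arr [seq (deg (ucm i), x i) | i <- s] t.
Proof.
move=> tt us hs.
set l := map _ s.
have szl : size l = size s by rewrite size_map.
rewrite /arr; set Aset := [set A | _].
set r := size l.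
set B := (\sum_(p <- l) p.2).+1.
pose g (i : 'I_r) := nth 0%N s i.
have ig : injective g.
  move=> i i' /eqP; rewrite /g nth_uniq -?szl ?ltn_ord // => /eqP h; exact: val_inj.
have hl (i : 'I_r) : nth (0, 0) l i = (deg (ucm (g i)), x (g i)).
  by rewrite /l (nth_map 0%N) // -szl ltn_ord.
have xs y : x y != 0%N -> exists i : 'I_r, g i = y.
  rewrite -hs => ys; have hi : (index y s < r)%N by rewrite /r szl index_mem.
  by exists (Ordinal hi); rewrite /g /= nth_index.
pose c (j : 'I_(size t)) := (nth (0, 0) t j).1.
pose n (j : 'I_(size t)) := (nth (0, 0) t j).2.
have npos j : (0 < n j)%N by have [] := is_typeP tt (ltn_ord j).
pose QA (A : {ffun 'I_r * 'I_(size t) -> 'I_B}) j : M :=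
  \big[@mulcm nat/@onecm nat]_(i < r) expcmn (ucm (g i)) (A (i, j)).
have QAe A j i : QA A j (g i) = A (i, j) by rewrite prod_eval sum_pick_g.
have QAout A j y : (forall i, g i != y) -> QA A j y = 0%N.
  by move=> hy; rewrite prod_eval sum_pick_out.
have QAdeg A j : deg (QA A j) = (\sum_(i < r) A (i, j) * (nth (0, 0) l i).1)%N.
  rewrite deg_prod; apply: eq_bigr => i _; by rewrite deg_exp hl.
have inA A : A \in Aset ->
    (forall i, \sum_(j < size t) A (i, j) * n j = (nth (0, 0) l i).2)%N /\
    (forall j, \sum_(i < r) A (i, j) * (nth (0, 0) l i).1 = c j)%N.
  by rewrite inE => /andP[/forallP h1 /forallP h2]; split => [i|j]; apply/eqP; [exact: h1|exact: h2].
pose phi A : {ffun 'I_(size t) -> 'I_(cN t)} :=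
  [ffun j => inord (index (QA A j) (fib (c j)))].
pose psi (f : {ffun 'I_(size t) -> 'I_(cN t)}) : {ffun 'I_r * 'I_(size t) -> 'I_B} :=
  [ffun ij => inord (bj f ij.2 (g ij.1))].
have QAfib A j : A \in Aset -> QA A j \in fib (c j).
  by move=> /inA [_ hc]; rewrite fibP QAdeg hc.
have phiv A j : A \in Aset -> (phi A j : nat) = index (QA A j) (fib (c j)).
  move=> hA; rewrite ffunE inordK //.
  have h : (index (QA A j) (fib (c j)) < size (fib (c j)))%N by rewrite index_mem QAfib.
  exact: ltn_trans h (size_fib_lt j).
have bjphi A j : A \in Aset -> bj (phi A) j = QA A j.
  by move=> hA; rewrite /bj phiv // nth_index // QAfib.
have phiT A : A \in Aset -> phi A \in Tset t x.
  move=> hA; rewrite inE; apply/andP; split.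
    apply/familyP => j; rewrite unfold_in /Qt phiv // index_mem; exact: QAfib.
  apply/cmP => y; rewrite /Pt bigcm_eval.
  under eq_bigr => j _ do rewrite expcmnE bjphi //.
  case: (boolP [exists i, g i == y]) => [/existsP [i /eqP <-]|/existsPn hn].
    have [hr _] := inA A hA.
    have := hr i; rewrite hl /= => <-; apply: eq_bigr => j _; by rewrite QAe mulnC.
  rewrite big1; last by move=> j _; rewrite QAout ?muln0.
  apply/esym/eqP; apply: contraT => /xs [i hi]; by move: (hn i); rewrite hi eqxx.
have psiphi A : A \in Aset -> psi (phi A) = A.
  move=> hA; apply/ffunP => -[i j]; rewrite ffunE /= bjphi // QAe; exact: inord_val.
have inT f : f \in Tset t x -> (forall j, (f j < size (fib (c j)))%N) /\ Pt f = x.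
  rewrite inE => /andP[/familyP hf /eqP ->]; split => // j; exact: hf.
have bjfib f j : f \in Tset t x -> bj f j \in fib (c j).
  by move=> /inT [hf _]; rewrite /bj mem_nth.
have xeval f y : f \in Tset t x -> x y = (\sum_(j < size t) n j * bj f j y)%N.
  move=> /inT [_ <-]; rewrite /Pt bigcm_eval; apply: eq_bigr => j _; by rewrite expcmnE.
have bjle f j y : f \in Tset t x -> (bj f j y <= x y)%N.
  move=> hf; rewrite (xeval f y hf) (bigD1 j) //=; apply: leq_trans (leq_addr _ _).
  by rewrite leq_pmull.
have bjsupp f j : f \in Tset t x -> forall y, bj f j y != 0%N -> exists i, g i = y.
  move=> hf y hy; apply: xs; rewrite -lt0n; apply: leq_trans (bjle f j y hf).
  by rewrite lt0n.
have bjdec f j : f \in Tset t x ->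
    bj f j = \big[@mulcm nat/@onecm nat]_(i < r) expcmn (ucm (g i)) (bj f j (g i)).
  by move=> hf; apply: decomp => //; exact: bjsupp.
have psiv f i j : f \in Tset t x -> (psi f (i, j) : nat) = bj f j (g i).
  move=> hf; rewrite ffunE inordK //= ltnS; apply: leq_trans (bjle f j _ hf) _.
  have := le_sm i; by rewrite hl.
have psiA f : f \in Tset t x -> psi f \in Aset.
  move=> hf; rewrite inE; apply/andP; split.
    apply/forallP => i.
    have e : (\sum_(j < size t) (psi f (i, j) : nat) * n j = x (g i))%N.
      rewrite (xeval f (g i) hf); apply: eq_bigr => j _; by rewrite psiv // mulnC.
    by apply/eqP; rewrite e hl.
  apply/forallP => j.
  have e : (\sum_(i < r) (psi f (i, j) : nat) * (nth (0, 0) l i).1 = deg (bj f j))%N.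
    rewrite [in RHS](bjdec f j hf) deg_prod; apply: eq_bigr => i _.
    by rewrite deg_exp psiv // hl.
  by apply/eqP; rewrite e; move: (bjfib f j hf); rewrite fibP => /eqP ->.
have phipsi f : f \in Tset t x -> phi (psi f) = f.
  move=> hf; apply/ffunP => j; apply: ord_inj; rewrite phiv //; last exact: psiA.
  have -> : QA (psi f) j = bj f j.
    rewrite (bjdec f j hf); apply: eq_bigr => i _; by rewrite psiv.
  have [hf' _] := inT f hf.
  by rewrite /bj index_uniq //; exact: hf'.
apply/eqP; rewrite eqn_leq; apply/andP; split.
  rewrite -(card_in_imset (f := psi)); last first.
    by move=> f1 f2 h1 h2 e; rewrite -(phipsi f1 h1) -(phipsi f2 h2) e.
  apply: subset_leq_card; apply/subsetP => A /imsetP [f hf ->]; exact: psiA.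
rewrite -(card_in_imset (f := phi)); last first.
  by move=> A1 A2 h1 h2 e; rewrite -(psiphi A1 h1) -(psiphi A2 h2) e.
apply: subset_leq_card; apply/subsetP => f /imsetP [A hA ->]; exact: phiT.
Qed.


Lemma core_perm t (x : M) l : is_type t -> perm_eq l (type_of deg x) ->
  #|Tset t x| = arr l t.
Proof.
move=> tt; rewrite /type_of.
set fs := (finsupp x : seq nat).
set F := fun i => (deg (ucm i), x i).
move=> /(perm_iotaP (0%N, 0%N)) [Is hIs ->].
have szF : size [seq F i | i <- fs] = size fs by rewrite size_map.
set s := map (nth 0%N fs) Is.
have hsf : perm_eq s fs.
  rewrite /s; have := perm_map (nth 0%N fs) hIs; rewrite szF.
  by rewrite -/(mkseq (nth 0%N fs) (size fs)) mkseq_nth.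
have -> : [seq nth (0%N, 0%N) [seq F i | i <- fs] i | i <- Is] = map F s.
  rewrite /s -map_comp; apply/eq_in_map => i hi /=.
  rewrite (nth_map 0%N) //; move: hi; rewrite (perm_mem hIs) mem_iota szF.
  by rewrite add0n.
apply: core => //; first by rewrite (perm_uniq hsf) /fs fset_uniq.
by move=> y; rewrite (perm_mem hsf) /fs cmE_neq0.
Qed.



End Core.

Section Ring.
Variable R : comNzRingType.

Lemma malgU_mul (a b : M) : << mulcm a b >> = << a >> * << b >> :> {malg R[M]}.
Proof. rewrite malgM_def fgmulUU mulr1. done. Qed.
Lemma malgU_one : << @onecm nat >> = 1 :> {malg R[M]}.
Proof. by rewrite -mpolyC1E. Qed.
Lemma malgU_prod (T : Type) (r : seq T) (F : T -> M) :
  \prod_(j <- r) << F j >> = << \big[@mulcm nat/@onecm nat]_(j <- r) F j >> :> {malg R[M]}.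
Proof.
apply/esym; apply: (big_morph (fun m : M => << m >> : {malg R[M]})).
  exact: malgU_mul.
exact: malgU_one.
Qed.

Lemma psi_term m (c : R) (k : M) :
  << c *g expcmn k m >> = << c *g @onecm nat >> * << expcmn k m >> :> {malg R[M]}.
Proof.
rewrite malgM_def fgmulUU mulr1.
by rewrite mul1m.
Qed.

Lemma psi_sum m (L : seq M) :
  psi m (\sum_(b <- L) << b >> : {malg R[M]}) = \sum_(b <- L) << expcmn b m >>.
Proof.
have E g : psi m g = mmap (@mkmalgU M R (@onecm nat)) (fun k => << expcmn k m >>) g.
  rewrite /psi mmapE; apply: eq_bigr => k _; exact: psi_term.
rewrite E raddf_sum /=; apply: eq_bigr => b _.
by rewrite mmapE msuppU1 big_seq_fset1 mcoeffUU mpolyC1E mul1r.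
Qed.

Variable fib : nat -> seq M.
Lemma sum_seq_ord (L : seq M) N (G : M -> {malg R[M]}) : (size L <= N)%N ->
  \sum_(b <- L) G b = \sum_(u < N | (u < size L)%N) G (nth (@onecm nat) L u).
Proof.
move=> h; rewrite (big_nth (@onecm nat)) big_mkord.
exact: (big_ord_widen N (fun u => G (nth (@onecm nat) L u)) h).
Qed.

Lemma St_coef t (x : M) : (St R fib t)@_x = (#|Tset fib t x|)%:R.
Proof.
rewrite /St.
under eq_bigr => p _ do rewrite psi_sum.
rewrite (big_nth (0%N, 0%N)) big_mkord.
have inner (j : 'I_(size t)) :
    \sum_(b <- fib (nth (0%N, 0%N) t j).1) << expcmn b (nth (0%N, 0%N) t j).2 >>
    = \sum_(u < cN fib t | @Qt fib t j u)
        << expcmn (nth (@onecm nat) (fib (nth (0%N, 0%N) t j).1) u) (nth (0%N, 0%N) t j).2 >>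
      :> {malg R[M]}.
  rewrite (sum_seq_ord (fun b => << expcmn b (nth (0%N, 0%N) t j).2 >>) (ltnW (size_fib_lt fib j))).
  by [].
under eq_bigr => j _ do rewrite inner.
rewrite bigA_distr_big_dep /=.
under eq_bigr => f _ do rewrite malgU_prod.
rewrite raddf_sum /=.
under eq_bigr => f _ do rewrite mcoeffU1.
rewrite -natr_sum; congr (_%:R).
transitivity (\sum_(f in family (@Qt fib t) | Pt f == x) 1)%N.
  rewrite big_mkcondr /=; apply: eq_bigr => f _; rewrite /Pt /bj; by case: (_ == x).
rewrite -sum1_card; apply: eq_bigl => f; by rewrite /Tset in_set.
Qed.
End Ring.

Definition one_m (m : M) : rat := 1.
Lemma one_m_mm : mmorphism one_m.
Proof. by split => // x y; rewrite /one_m mulr1. Qed.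
HB.instance Definition _ := isMultiplicative.Build _ _ one_m one_m_mm.
Definition eps (g : {malg rat[M]}) : rat := mmap (@idfun rat) one_m g.
Lemma eps_prod (T : Type) (r : seq T) (F : T -> {malg rat[M]}) :
  eps (\prod_(j <- r) F j) = \prod_(j <- r) eps (F j).
Proof. exact: rmorph_prod. Qed.
Lemma eps_sum (T : Type) (r : seq T) (P : pred T) (F : T -> {malg rat[M]}) :
  eps (\sum_(j <- r | P j) F j) = \sum_(j <- r | P j) eps (F j).
Proof. exact: raddf_sum. Qed.
Lemma epsZ c g : eps (c *: g) = c * eps g.
Proof. exact: mmapZ. Qed.
Lemma epsU (b : M) : eps << b >> = 1.
Proof. by rewrite /eps mmapE msuppU1 big_seq_fset1 mcoeffUU /one_m mulr1. Qed.

Section Main.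
Variables (deg : M -> nat) (fib : nat -> seq M).
Hypothesis deg_one : deg (@onecm nat) = 0%N.
Hypothesis deg_mul : forall x y : M, deg (mulcm x y) = (deg x + deg y)%N.
Hypothesis deg_eq0 : forall b : M, deg b = 0%N -> b = @onecm nat.
Hypothesis fibP : forall (d : nat) (b : M), (b \in fib d) = (deg b == d).
Hypothesis fib_uniq : forall d : nat, uniq (fib d).

Lemma type_of_is_type (x : M) : is_type (type_of deg x).
Proof.
apply/allP => p /mapP [i hi ->] /=.
by rewrite (deg_ucm_pos deg_eq0) /= lt0n cmE_neq0.
Qed.

Lemma tdeg_type_of (x : M) : tdeg (type_of deg x) = deg x.
Proof.
rewrite /tdeg /type_of big_map /=.
set fs := (finsupp x : seq nat).
pose g (i : 'I_(size fs)) := nth 0%N fs i.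
have ig : injective g.
  move=> i i' /eqP; rewrite /g nth_uniq ?ltn_ord ?fset_uniq // => /eqP h; exact: val_inj.
have hx : forall y, x y != 0%N -> exists i, g i = y.
  move=> y; rewrite cmE_neq0 -/fs => ys.
  have hi : (index y fs < size fs)%N by rewrite index_mem.
  by exists (Ordinal hi); rewrite /g /= nth_index.
rewrite [in RHS](decomp ig hx) (deg_prod deg_one deg_mul) (big_nth 0%N) big_mkord.
by apply: eq_bigr => i _; rewrite (deg_exp deg_one deg_mul) mulnC.
Qed.

Lemma Tset_deg t (x : M) f : f \in Tset fib t x -> deg x = tdeg t.
Proof.
rewrite inE => /andP[/familyP hf /eqP <-].
rewrite /Pt (deg_prod deg_one deg_mul) /tdeg (big_nth (0%N, 0%N)) big_mkord.
apply: eq_bigr => j _; rewrite (deg_exp deg_one deg_mul).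
have : bj f j \in fib (nth (0%N, 0%N) t j).1 by rewrite /bj mem_nth //; exact: hf.
by rewrite fibP => /eqP ->; rewrite mulnC.
Qed.

Lemma sum_eq_nat (L : seq M) (P : pred M) x : uniq L ->
  (\sum_(b <- L | P b) (b == x))%N = ((x \in L) && P x).
Proof.
elim: L => [|y L IH]; first by rewrite big_nil.
move=> /andP[yL uL]; rewrite big_cons IH // inE.
case: (eqVneq y x) => [<-|ne] /=.
  by rewrite (negbTE yL) /=; case: (P y).
by case: (P y).
Qed.

Lemma coefU_sum (R : comNzRingType) (L : seq M) (P : pred M) x : uniq L ->
  (\sum_(b <- L | P b) << b >> : {malg R[M]})@_x = ((x \in L) && P x)%:R.
Proof.
move=> uL; rewrite raddf_sum /=.
under eq_bigr => b _ do rewrite mcoeffU1.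
by rewrite -natr_sum sum_eq_nat.
Qed.


Lemma sum_bool_count (T : Type) (s : seq T) (a : pred T) :
  (\sum_(l <- s) a l)%N = count a s.
Proof. by elim: s => [|y s IH]; rewrite ?big_nil ?big_cons //= IH. Qed.

Lemma part2 (R : comNzRingType) tau : is_type tau ->
  St R fib tau = \sum_(l <- types (tdeg tau)) Xt R deg fib l *+ arr l tau.
Proof.
move=> tt; apply/malgP => x.
rewrite St_coef raddf_sum /=.
under eq_bigr => l _ do rewrite mcoeffMn.
set d := tdeg tau.
have Xc l : l \in types d ->
    (Xt R deg fib l)@_x = ((x \in fib d) && perm_eq (type_of deg x) l)%:R.
  by move=> /types_mem [_ dl]; rewrite /Xt dl coefU_sum.
rewrite big_seq; under eq_bigr => l hl do rewrite Xc // -mulrnA.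
rewrite -natr_sum -big_seq; congr (_%:R).
case hx: (x \in fib d); last first.
  rewrite big1; last by move=> l _; rewrite mul0n.
  apply: eq_card0 => f; apply/negbTE/negP => hf.
  by move: hx; rewrite fibP (Tset_deg hf) eqxx.
transitivity (\sum_(l <- types d) perm_eq (type_of deg x) l * #|Tset fib tau x|)%N; last first.
  apply: eq_bigr => l _ /=; case hp: (perm_eq _ _) => //=.
  by rewrite !mul1n (@core_perm deg fib deg_one deg_mul fibP fib_uniq tau x l tt) // perm_sym.
rewrite -big_distrl /= sum_bool_count.
have -> : count (perm_eq (type_of deg x)) (types d) = 1%N.
  apply/eqP; rewrite eqn_leq types_count /= -has_count.
  have [l hl hp] := types_ex (type_of_is_type x).
  apply/hasP; exists l => //.
  by move: hl; rewrite tdeg_type_of; move: hx; rewrite fibP => /eqP ->.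
by rewrite mul1n.
Qed.


Lemma Xt_perm (R : comNzRingType) l l' : perm_eq l l' -> Xt R deg fib l = Xt R deg fib l'.
Proof.
move=> hp; rewrite /Xt /tdeg (perm_big _ hp).
by apply: eq_bigl => b; apply: (permPr hp).
Qed.

Lemma type_idx_nth d (i : 'I_(size (types d))) :
  type_idx d (nth [::] (types d) i) = Some i.
Proof.
rewrite /type_idx; have h : find (perm_eq (nth [::] (types d) i)) (types d) = i.
  apply: (@find_nth _ [::] (perm_eq (nth [::] (types d) i)) (types d) i); [exact: types_count | exact: ltn_ord | exact: perm_refl].
rewrite insubT; first by rewrite h.
move=> hh; congr Some; apply: val_inj => /=; exact: h.
Qed.

Lemma part3 tau : is_type tau ->
  Xt rat deg fib tau = \sum_(l <- types (tdeg tau)) ainv (tdeg tau) l tau *: St rat fib l.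
Proof.
move=> tt; set d := tdeg tau; set s := types d.
have [l0 hl0 hp0] := types_ex tt.
have hj : (find (perm_eq tau) s < size s)%N by rewrite -has_find; apply/hasP; exists l0.
pose j0 := Ordinal hj.
have ej0 : type_idx d tau = Some j0.
  by rewrite /type_idx insubT; congr Some; apply: val_inj.
have pj0 : perm_eq tau (nth [::] s j0) by apply: nth_find; apply/hasP; exists l0.
rewrite (big_nth [::]) big_mkord.
have eS (i : 'I_(size s)) : St rat fib (nth [::] s i) =
    \sum_(i' < size s) (arr (nth [::] s i') (nth [::] s i))%:R *: Xt rat deg fib (nth [::] s i').
  have [ti di] := types_mem (mem_nth [::] (ltn_ord i)).
  rewrite part2 // di (big_nth [::]) big_mkord; apply: eq_bigr => i' _.
  by rewrite scaler_nat.
under eq_bigr => i _ do rewrite /ainv type_idx_nth ej0 eS scaler_sumr.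
rewrite exchange_big /=.
under eq_bigr => i' _ do under eq_bigr => i _ do rewrite scalerA.
under eq_bigr => i' _ do rewrite -scaler_suml.
have eM (i' : 'I_(size s)) : \sum_(i < size s) invmx (amx d) i j0 * (arr (nth [::] s i') (nth [::] s i))%:R
    = (i' == j0)%:R.
  have := congr1 (fun m : 'M[rat]_(size s) => m i' j0) (mulmxV (amx_unit d)).
  rewrite !mxE /= => <-; apply: eq_bigr => i _; by rewrite mxE mulrC.
under eq_bigr => i' _ do rewrite eM.
rewrite (bigD1 j0) //= eqxx scale1r big1 ?addr0; last first.
  by move=> i hi; rewrite (negbTE hi) scale0r.
exact: Xt_perm.
Qed.


Lemma part4 lam : is_type lam ->
  (count (fun b => perm_eq (type_of deg b) lam) (fib (tdeg lam)))%:R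
    = \sum_(t <- types (tdeg lam))
        ainv (tdeg lam) t lam * \prod_(p <- t) (size (fib p.1))%:R :> rat.
Proof.
move=> tl; have := congr1 eps (part3 tl).
rewrite /Xt eps_sum.
under eq_bigr => b _ do rewrite epsU.
rewrite -sum1_count natr_sum => ->.
rewrite eps_sum; apply: eq_bigr => t _.
rewrite epsZ /St eps_prod; congr (_ * _); apply: eq_bigr => p _.
rewrite psi_sum eps_sum.
under eq_bigr => b _ do rewrite epsU.
by rewrite -sum1_size natr_sum.
Qed.

End Main.


Theorem theorem5
  (deg : M -> nat) (fib : nat -> seq M)
  (deg_one : deg (@onecm nat) = 0%N)
  (deg_mul : forall x y : M, deg (mulcm x y) = (deg x + deg y)%N)
  (deg_eq0 : forall b : M, deg b = 0%N -> b = @onecm nat)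
  (fibP : forall (d : nat) (b : M), (b \in fib d) = (deg b == d))
  (fib_uniq : forall d : nat, uniq (fib d)) :
  (forall d : nat, amx d \in unitmx) /\
  (forall tau, is_type tau ->
     @St int fib tau
       = \sum_(l <- types (tdeg tau)) @Xt int deg fib l *+ arr l tau) /\
  (forall tau, is_type tau ->
     @Xt rat deg fib tau
       = \sum_(l <- types (tdeg tau)) ainv (tdeg tau) l tau *: @St rat fib l) /\
  (forall lam, is_type lam ->
     (count (fun b => perm_eq (type_of deg b) lam) (fib (tdeg lam)))%:R
       = \sum_(t <- types (tdeg lam))
           ainv (tdeg lam) t lam * \prod_(p <- t) (size (fib p.1))%:R :> rat).
Proof.
split; first exact: amx_unit.
split; first by move=> tau tt; exact: (part2 deg_one deg_mul deg_eq0 fibP fib_uniq int tt).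
split; first by move=> tau tt; exact: (part3 deg_one deg_mul deg_eq0 fibP fib_uniq tt).
by move=> lam tl; exact: (part4 deg_one deg_mul deg_eq0 fibP fib_uniq tl).
Qed.
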